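(* Let $S^{\circ}_{n'}=\langle s_{1'},s_2,\dots,s_{n-1}\rangle\le D_n$ and $\pi\in S^{\circ}_{n'}$. Let $\Phi(\pi)=\pi'^{(1)}\cdots\pi'^{(z)}$ be the standard OGS elementary factorization of $\Phi(\pi)\in S_n$, with $\pi'^{(v)}=\prod_{j=1}^{m^{(v)}}t_{h^{(v)}_j}^{\imath^{(v)}_j}$. For each $v$ let $\tau_v\in D_n$ be the element $\prod_{j=1}^{m^{(v)}}t_{h^{(v)}_j}^{\imath^{(v)}_j}$ computed in $D_n$. Then $\pi=\pi_1\cdot\pi_2\cdots\pi_z$, where $\pi_v=\tau_v$ if $\operatorname{maj}(\pi'^{(v)})=h^{(v)}_1$, and $\pi_v=w_{\operatorname{maj}(\pi'^{(v)})}\cdot\tau_v$ if $\operatorname{maj}(\pi'^{(v)})<h^{(v)}_1$.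
   Context: $D_n$ ($n\ge2$) is the Coxeter group with generators $s_{1'},s_1,\dots,s_{n-1}$ and relations $s^2=1$, $(s_i s_{i+1})^3=1$, $(s_is_j)^2=1$ for $|i-j|\ge 2$, $(s_{1'}s_2)^3=1$, $(s_{1'}s_i)^2=1$ for $i\ne 2$. In $D_n$ (and in $S_n$): $t_k=s_1\cdots s_{k-1}$; in $D_n$: $w_k=s_k s_{k-1}\cdots s_2 s_1 s_{1'} s_2\cdots s_k$ ($1\le k\le n-1$). $\Phi:D_n\to S_n$ is the homomorphism $s_{1'}\mapsto s_1$, $s_i\mapsto s_i$ ($S_n$ generated by $s_i=(i,i+1)$). Every $\sigma\in S_n$ has a unique standard OGS canonical form $t_2^{i_2}\cdots t_n^{i_n}$ ($0\le i_k<k$); writing only nonzero factors $\sigma=t_{k_1}^{i_{k_1}}\cdots t_{k_m}^{i_{k_m}}$, $\operatorname{maj}(\sigma)=\sum_j i_{k_j}$, and $\sigma$ is a standard OGS elementary element if $\sum_j i_{k_j}\le k_1$. The standard OGS elementary factorization of $\sigma$: $\sigma=\prod_{v=1}^{z}\sigma^{(v)}$ with $\sigma^{(v)}=\prod_{j=1}^{m^{(v)}}t_{h^{(v)}_j}^{\imath^{(v)}_j}$ in standard OGS canonical form, all $\imath^{(v)}_j>0$, $\operatorname{maj}(\sigma^{(1)})\le h^{(1)}_1$, and $h^{(v-1)}_{m^{(v-1)}}\le\operatorname{maj}(\sigma^{(v)})\le h^{(v)}_1$ for $2\le v\le z$, where $z$ is the minimal number for which such a presentation exists (it is unique). *)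

(* Defs.v *)
From mathcomp Require Import all_boot all_fingroup.
Set Implicit Arguments. Unset Strict Implicit. Unset Printing Implicit Defensive.

(* ---------- Generators of D_n, encoded as naturals ----------
   letter 0      stands for s_{1'}
   letter k >= 1 stands for s_k   (1 <= k <= n-1)
   A word is a seq nat; it is evaluated in a group gT via g : nat -> gT. *)

Definition evalW (gT : finGroupType) (g : nat -> gT) (w : seq nat) : gT :=
  (\prod_(x <- w) g x)%g.

Definition Dn_rels (n : nat) (gT : finGroupType) (g : nat -> gT) : Prop :=
  [/\ (g 0 ^+ 2 = 1)%g,
      forall i, 1 <= i <= n.-1 -> (g i ^+ 2 = 1)%g,
      forall i, 1 <= i -> i.+1 <= n.-1 -> ((g i * g i.+1) ^+ 3 = 1)%g,
      forall i j, 1 <= i <= n.-1 -> 1 <= j <= n.-1 -> i.+2 <= j ->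
                  ((g i * g j) ^+ 2 = 1)%g &
      (2 <= n.-1 -> ((g 0 * g 2) ^+ 3 = 1)%g) /\
      (forall i, 1 <= i <= n.-1 -> i != 2 -> ((g 0 * g i) ^+ 2 = 1)%g)].

(* Words for t_k = s_1 ... s_{k-1} and w_k = s_k ... s_2 s_1 s_{1'} s_2 ... s_k in D_n. *)
Definition tD (k : nat) : seq nat := iota 1 k.-1.
Definition wD (k : nat) : seq nat := rev (iota 1 k) ++ 0 :: iota 2 k.-1.

(* s_i = (i, i+1) (1-based), i.e. the transposition of the 0-based points i-1, i. *)
Definition sgen (n i : nat) : 'S_n :=
  match insub i.-1, insub i with
  | Some a, Some b => tperm a b
  | _, _ => 1%g
  end.

Definition tS (n k : nat) : 'S_n := (\prod_(i <- iota 1 k.-1) sgen n i)%g.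

Definition PhiW (n : nat) (w : seq nat) : 'S_n :=
  (\prod_(x <- w) sgen n (if x == 0%N then 1%N else x))%g.

(* ---------- Standard OGS elementary factorizations ----------
   A factor  prod_j t_{h_j}^{i_j}  is represented by the list of pairs (h_j, i_j). *)
Definition factor_val (n : nat) (f : seq (nat * nat)) : 'S_n :=
  (\prod_(p <- f) (tS n p.1) ^+ p.2)%g.

Definition canon_pos (n : nat) (f : seq (nat * nat)) : bool :=
  [&& f != [::], sorted ltn (map fst f) &
      all (fun p => [&& 2 <= p.1 <= n & 0 < p.2 < p.1]) f].

Definition majf (f : seq (nat * nat)) : nat := \sum_(p <- f) p.2.
Definition firstH (f : seq (nat * nat)) : nat := (head (0, 0) f).1.
Definition lastH (f : seq (nat * nat)) : nat := (last (0, 0) f).1.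

(* fs is a presentation of sigma as in the definition of the standard OGS
   elementary factorization (without the minimality requirement). *)
Definition is_elem_pres (n : nat) (sigma : 'S_n) (fs : seq (seq (nat * nat))) : Prop :=
  [/\ all (canon_pos n) fs,
      all (fun f => majf f <= firstH f) fs,
      sorted (fun f g => lastH f <= majf g) fs &
      sigma = (\prod_(f <- fs) factor_val n f)%g].

Definition is_std_elem_fact (n : nat) (sigma : 'S_n) (fs : seq (seq (nat * nat))) : Prop :=
  is_elem_pres sigma fs /\
  forall fs', is_elem_pres sigma fs' -> size fs <= size fs'.

Definition tauD (f : seq (nat * nat)) : seq nat :=
  flatten (map (fun p => flatten (nseq p.2 (tD p.1))) f).

Definition piD (f : seq (nat * nat)) : seq nat :=
  if majf f == firstH f then tauD f else wD (majf f) ++ tauD f.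

(* Main.v *)
Require Import Defs.
From mathcomp Require Import all_boot all_fingroup zify.
From Stdlib Require Import Lia.
Set Implicit Arguments. Unset Strict Implicit. Unset Printing Implicit Defensive.
Open Scope group_scope.

Lemma evalW_nil (gT : finGroupType) (r : nat -> gT) : evalW r [::] = 1.
Proof. by rewrite /evalW big_nil. Qed.
Lemma evalW_cons (gT : finGroupType) (r : nat -> gT) x s :
  evalW r (x :: s) = r x * evalW r s.
Proof. by rewrite /evalW big_cons. Qed.
Lemma evalW_cat (gT : finGroupType) (r : nat -> gT) s t :
  evalW r (s ++ t) = evalW r s * evalW r t.
Proof. by rewrite /evalW big_cat. Qed.
Lemma evalW_rcons (gT : finGroupType) (r : nat -> gT) s x :
  evalW r (rcons s x) = evalW r s * r x.
Proof. by rewrite -cats1 evalW_cat evalW_cons evalW_nil mulg1. Qed.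

Lemma evalW_comm (gT : finGroupType) (r : nat -> gT) s y :
  (forall x, x \in s -> r x * y = y * r x) -> evalW r s * y = y * evalW r s.
Proof.
elim: s => [|x s IH] H; first by rewrite evalW_nil mul1g mulg1.
rewrite evalW_cons -mulgA IH; last by move=> z zs; apply: H; rewrite inE zs orbT.
by rewrite !mulgA H // inE eqxx.
Qed.

Lemma evalW_rev (gT : finGroupType) (r : nat -> gT) s :
  (forall x, x \in s -> r x * r x = 1) -> evalW r (rev s) = (evalW r s)^-1.
Proof.
elim: s => [|x s IH] H; first by rewrite evalW_nil invg1.
rewrite rev_cons evalW_rcons evalW_cons invMg IH; last by move=> z zs; apply: H; rewrite inE zs orbT.
congr (_ * _). have e : r x * r x = 1 by apply: H; rewrite inE eqxx.
by apply: (mulgI (r x)); rewrite mulgV e.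
Qed.

Definition ArelR (gT : finGroupType) (r : nat -> gT) (lo hi : nat) :=
  [/\ forall i, lo <= i <= hi -> r i * r i = 1,
      forall i, lo <= i -> i < hi -> r i * r i.+1 * r i = r i.+1 * r i * r i.+1 &
      forall i j, lo <= i -> i.+1 < j -> j <= hi -> r i * r j = r j * r i].

Lemma ArelR_mono (gT : finGroupType) (r : nat -> gT) lo hi lo' hi' :
  lo <= lo' -> hi' <= hi -> ArelR r lo hi -> ArelR r lo' hi'.
Proof.
move=> h1 h2 [H1 H2 H3]; split.
- move=> i hi0; apply: H1; lia.
- move=> i h3 h4; apply: H2; lia.
- move=> i j h3 h4 h5; apply: H3; lia.
Qed.

Definition ch (gT : finGroupType) (r : nat -> gT) top a := evalW r (rev (iota a (top.+1 - a))).

Lemma chS (gT : finGroupType) (r : nat -> gT) top a : a <= top ->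
  ch r top a = ch r top a.+1 * r a.
Proof.
move=> h; rewrite /ch subSn // subSS /= rev_cons evalW_rcons //.
Qed.

Lemma ch_end (gT : finGroupType) (r : nat -> gT) top : ch r top top.+1 = 1.
Proof. by rewrite /ch subnn /= evalW_nil. Qed.

Lemma ch_comm (gT : finGroupType) (r : nat -> gT) top a y :
  (forall j, a <= j <= top -> r j * y = y * r j) -> ch r top a * y = y * ch r top a.
Proof.
move=> H; apply: evalW_comm => x; rewrite mem_rev mem_iota => hx; apply: H; lia.
Qed.

Lemma ch_slide (gT : finGroupType) (r : nat -> gT) top i : ArelR r 1 top -> i <= top ->
  forall k a, a + k.+1 = i -> 1 <= a -> ch r top a * r i = r i.-1 * ch r top a.
Proof.
move=> [H1 H2 H3] hi; elim=> [|k IH] a ha a1.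
- subst i; rewrite addn1 in hi *; rewrite /=.
  rewrite chS; last by lia.
  rewrite (@chS _ r top a.+1) //.
  have hc : ch r top a.+2 * r a = r a * ch r top a.+2.
    apply: ch_comm => j hj. apply/esym/H3; lia.
  rewrite -!mulgA [r a.+1 * (r a * r a.+1)]mulgA -H2; try lia.
  by rewrite -!mulgA !mulgA hc.
- rewrite chS; last by lia.
  rewrite -mulgA H3; try lia. rewrite mulgA IH; try lia.
  by rewrite -mulgA -chS //; lia.
Qed.

Definition gensA (gT : finGroupType) (r : nat -> gT) m := [set r (nat_of_ord i).+1 | i : 'I_m].
Definition HA (gT : finGroupType) (r : nat -> gT) m := <<gensA r m>>.

Lemma memHA (gT : finGroupType) (r : nat -> gT) m i : 0 < i <= m -> r i \in HA r m.
Proof.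
move=> h. apply: mem_gen. apply/imsetP.
have hi : i.-1 < m by lia.
exists (Ordinal hi) => //=. by rewrite prednK //; lia.
Qed.

Lemma HA_step (gT : finGroupType) (r : nat -> gT) m : ArelR r 1 m.+1 ->
  #|HA r m.+1| <= (#|HA r m| * m.+2)%N.
Proof.
move=> Ar; have [H1 H2 H3] := Ar.
set C := [set ch r m.+1 (nat_of_ord a).+1 | a : 'I_m.+2].
set X := HA r m * C.
have memC : forall a, 1 <= a <= m.+2 -> ch r m.+1 a \in C.
  move=> a ha; apply/imsetP; have hi : a.-1 < m.+2 by lia.
  exists (Ordinal hi) => //=; rewrite prednK //; lia.
have step : forall a i, 1 <= a <= m.+2 -> 1 <= i <= m.+1 ->
    exists h a', [/\ h \in HA r m, 1 <= a' <= m.+2 & ch r m.+1 a * r i = h * ch r m.+1 a'].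
  move=> a i ha hi.
  case: (ltngtP i a) => hia.
  - case: (ltngtP i.+1 a) => hia2.
    + exists (r i), a; split; [apply: memHA; lia | lia | ].
      apply: ch_comm => j hj; apply/esym/H3; lia.
    + lia.
    + subst a. exists 1, i; split; [exact: group1 | lia | ].
      by rewrite mul1g (@chS _ r m.+1 i) //; lia.
  - exists (r i.-1), a; split; [apply: memHA; lia | lia | ].
    have hs := @ch_slide _ r m.+1 i Ar (ltac:(lia)) (i - a.+1) a. apply: hs; lia.
  - subst a. exists 1, i.+1; split; [exact: group1 | lia | ].
    rewrite mul1g chS; last by lia.
    by rewrite -mulgA H1 ?mulg1 //; lia.
have closed : forall y i, y \in X -> 1 <= i <= m.+1 -> y * r i \in X.
  move=> y i /mulsgP [h c hH /imsetP [a _ ->] ->] hi.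
  have [h' [a' [h'H ha' e]]] := step a.+1 i (ltac:(move: (ltn_ord a); lia)) hi.
  rewrite -mulgA e mulgA; apply: mem_mulg; first by apply: groupM.
  exact: memC.
set T := [set y | [forall x in X, x * y \in X]].
have gT_T : group_set T.
  apply/group_setP; split.
  - rewrite inE; apply/forall_inP => x xX; by rewrite mulg1.
  - move=> x y; rewrite !inE => /forall_inP hx /forall_inP hy.
    apply/forall_inP => z zX; rewrite mulgA; apply: hy; exact: hx.
have sub : HA r m.+1 \subset X.
  have : HA r m.+1 \subset Group gT_T.
    rewrite gen_subG; apply/subsetP => y /imsetP [i _ ->].
    rewrite inE; apply/forall_inP => x xX; apply: closed => //; move: (ltn_ord i); lia.
  move=> /subsetP hs; apply/subsetP => y /hs; rewrite inE => /forall_inP h.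
  rewrite -(mul1g y); apply: h.
  rewrite -(mul1g 1); apply: mem_mulg; first exact: group1.
  rewrite -(ch_end r m.+1); apply: memC; lia.
apply: leq_trans (subset_leq_card sub) _.
have cardX : #|X| <= #|HA r m| * #|C|.
  rewrite /X -cardsX. have -> : HA r m * C = mul @2: (HA r m, C) by [].
  rewrite curry_imset2X. exact: leq_imset_card.
apply: leq_trans cardX _; apply: leq_mul => //.
apply: leq_trans (leq_imset_card _ _) _. by rewrite card_ord.
Qed.

Lemma HA_card (gT : finGroupType) (r : nat -> gT) m : ArelR r 1 m -> #|HA r m| <= m.+1`!.
Proof.
elim: m => [|m IH] Ar.
- have -> : HA r 0 = 1.
    apply/eqP; rewrite eqEsubset sub1G andbT gen_subG.
    by apply/subsetP => y /imsetP [[i hi] _ _].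
  by rewrite cards1.
- apply: leq_trans (HA_step Ar) _.
  rewrite factS mulnC; apply: leq_mul => //; apply: IH.
  apply: ArelR_mono Ar => //.
Qed.

Lemma sgenE n i (h : i < n) (h' : i.-1 < n) : sgen n i = tperm (Ordinal h') (Ordinal h).
Proof. by rewrite /sgen (insubT (fun x => x < n) h') (insubT (fun x => x < n) h). Qed.

Lemma sgen_inv n i : sgen n i * sgen n i = 1.
Proof. rewrite /sgen; case: insub => [a|]; last by rewrite mulg1.
case: insub => [b|]; last by rewrite mulg1. exact: tperm2.
Qed.

Lemma ord_neq n (x y : 'I_n) : val x != val y -> x != y.
Proof. by move=> h; apply/eqP => e; move: h; rewrite e eqxx. Qed.

Lemma tperm_braid (T : finType) (a b c : T) : a != b -> b != c -> a != c ->
  tperm a b * tperm b c * tperm a b = tperm b c * tperm a b * tperm b c.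
Proof.
move=> hab hbc hac.
have e1 : tperm a b * tperm b c * tperm a b = (tperm b c) ^ (tperm a b).
  by rewrite /conjg tpermV mulgA.
have e2 : tperm b c * tperm a b * tperm b c = (tperm a b) ^ (tperm b c).
  by rewrite /conjg tpermV mulgA.
rewrite e1 e2 !tpermJ tpermR tpermL (tpermD hac hbc) (tpermD _ _) //.
- by rewrite eq_sym.
- by rewrite eq_sym.
Qed.

Lemma tperm_comm (T : finType) (a b c d : T) : a != c -> a != d -> b != c -> b != d ->
  tperm a b * tperm c d = tperm c d * tperm a b.
Proof.
move=> h1 h2 h3 h4.
have e : (tperm c d) ^ (tperm a b) = tperm c d.
  rewrite tpermJ (tpermD h1 h3) (tpermD h2 h4) //.
move: e; rewrite /conjg tpermV => e.
by rewrite -{2}e !mulgA -(mulgA _ (tperm a b)) tperm2 mulg1.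
Qed.

Lemma sgen_rel n : ArelR (sgen n) 1 n.-1.
Proof.
split.
- by move=> i _; apply: sgen_inv.
- move=> i h1 h2.
  have hc : i.+1 < n by lia. have hb : i < n by lia. have ha : i.-1 < n by lia.
  rewrite (sgenE hc hb) (sgenE hb ha).
  apply: tperm_braid; apply: ord_neq => /=; lia.
- move=> i j h1 h2 h3.
  have hj : j < n by lia. have hj' : j.-1 < n by lia.
  have hi : i < n by lia. have hi' : i.-1 < n by lia.
  rewrite (sgenE hj hj') (sgenE hi hi').
  apply: tperm_comm; apply: ord_neq => /=; lia.
Qed.

Lemma sgen_gen n : [set: {perm 'I_n.+1}] \subset HA (sgen n.+1) n.
Proof.
rewrite -(gen_tperm ord0) gen_subG; apply/subsetP => _ /imsetP [y _ ->].
case: y => k; elim: k => [|k IH] hk.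
  have -> : Ordinal hk = ord0 by apply: val_inj.
  by rewrite tperm1 group1.
case: k IH hk => [|k] IH hk.
  have -> : tperm ord0 (Ordinal hk) = sgen n.+1 1.
    rewrite (sgenE hk (_ : 0 < n.+1)) //. by congr tperm; apply: val_inj.
  apply: memHA; lia.
have hk1 : k.+1 < n.+1 by lia.
have -> : tperm ord0 (Ordinal hk) = (tperm ord0 (Ordinal hk1)) ^ (sgen n.+1 k.+2).
  rewrite (sgenE hk hk1).
  rewrite tpermJ tpermL tpermD //; apply: ord_neq => /=; lia.
apply: groupJ; first exact: IH.
apply: memHA; lia.
Qed.

Lemma pairM (gT1 gT2 : finGroupType) (x y : gT1 * gT2) : x * y = (x.1 * y.1, x.2 * y.2).
Proof. by []. Qed.

Lemma evalW_pair (gT1 gT2 : finGroupType) (r1 : nat -> gT1) (r2 : nat -> gT2) w :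
  evalW (fun i => (r1 i, r2 i) : gT1 * gT2) w = (evalW r1 w, evalW r2 w).
Proof.
elim: w => [|x w IH]; first by rewrite !evalW_nil.
by rewrite !evalW_cons IH.
Qed.

Lemma evalW_memHA (gT : finGroupType) (r : nat -> gT) m w :
  all (fun x => 0 < x <= m) w -> evalW r w \in HA r m.
Proof.
elim: w => [|x w IH]; first by rewrite evalW_nil group1.
move=> /= /andP [hx hw]; rewrite evalW_cons; apply: groupM; last exact: IH.
exact: memHA.
Qed.

Theorem presentation (n : nat) (gT : finGroupType) (r : nat -> gT) :
  0 < n -> ArelR r 1 n.-1 -> forall w1 w2,
  all (fun x => 0 < x <= n.-1) w1 -> all (fun x => 0 < x <= n.-1) w2 ->
  evalW (sgen n) w1 = evalW (sgen n) w2 -> evalW r w1 = evalW r w2.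
Proof.
case: n => [//|n] _ Ar w1 w2 h1 h2 e.
set r' := (fun i => (r i, sgen n.+1 i) : gT * {perm 'I_n.+1}).
have Ar' : ArelR r' 1 n.
  have [A1 A2 A3] := Ar; have [S1 S2 S3] := sgen_rel n.+1.
  split.
  - move=> i hi; rewrite /r' /= pairM /= A1 // S1 //.
  - move=> i hi1 hi2; rewrite /r' !pairM /= A2 // S2 //.
  - move=> i j hi1 hi2 hi3; rewrite /r' !pairM /= A3 // S3 //.
set G := HA r' n.
have cG : #|G| <= n.+1`! := HA_card Ar'.
set Q := [set x.2 | x in G].
have gQ : group_set Q.
  apply/group_setP; split.
  - apply/imsetP; exists 1; first exact: group1. by [].
  - move=> _ _ /imsetP [x xG ->] /imsetP [y yG ->].
    apply/imsetP; exists (x * y); first exact: groupM. by [].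
have sQ : [set: {perm 'I_n.+1}] \subset Q.
  apply: subset_trans (sgen_gen n) _.
  have : HA (sgen n.+1) n \subset Group gQ.
    rewrite gen_subG; apply/subsetP => _ /imsetP [i _ ->].
    apply/imsetP; exists (r' i.+1) => //; apply: memHA; move: (ltn_ord i); lia.
  by [].
have cQ : n.+1`! <= #|Q|.
  by rewrite -card_Sn -cardsT; apply: subset_leq_card.
have inj : {in G &, injective (fun x : gT * {perm 'I_n.+1} => x.2)}.
  apply/imset_injP; rewrite eqn_leq leq_imset_card /=.
  by apply: leq_trans cG cQ.
have m1 := evalW_memHA r' h1. have m2 := evalW_memHA r' h2.
rewrite /r' !evalW_pair in m1 m2.
have := inj _ _ m1 m2; rewrite /= e => /(_ erefl) [].
by [].
Qed.

Lemma exp2g (gT : finGroupType) (z : gT) : z ^+ 2 = z * z.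
Proof. by rewrite !expgS expg0 mulg1. Qed.
Lemma exp3g (gT : finGroupType) (z : gT) : z ^+ 3 = z * z * z.
Proof. by rewrite !expgS expg0 mulg1 mulgA. Qed.

Lemma inv_of (gT : finGroupType) (x : gT) : x * x = 1 -> x^-1 = x.
Proof. by move=> h; apply: (mulgI x); rewrite mulgV h. Qed.

Lemma braid_of (gT : finGroupType) (x y : gT) : x * x = 1 -> y * y = 1 ->
  (x * y) ^+ 3 = 1 -> x * y * x = y * x * y.
Proof.
move=> hx hy; rewrite exp3g => h.
have : (x * y * x)^-1 = y * x * y.
  apply/eqP; rewrite eq_invg_mul; apply/eqP; rewrite -h !mulgA //.
by rewrite !invMg !inv_of // mulgA.
Qed.

Lemma comm_of (gT : finGroupType) (x y : gT) : x * x = 1 -> y * y = 1 ->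
  (x * y) ^+ 2 = 1 -> x * y = y * x.
Proof.
move=> hx hy; rewrite exp2g => h.
have : (x * y)^-1 = x * y by apply: inv_of.
by rewrite invMg !inv_of // => <-.
Qed.

Lemma cube_of (gT : finGroupType) (x y : gT) : x * x = 1 -> y * y = 1 ->
  x * y * x = y * x * y -> (x * y) ^+ 3 = 1.
Proof.
move=> hx hy h; rewrite exp3g.
have -> : x * y * (x * y) * (x * y) = (x * y * x) * (y * x * y) by rewrite !mulgA.
by rewrite h !mulgA -(mulgA _ y y) hy mulg1 -(mulgA _ x x) hx mulg1 hy.
Qed.

Lemma sq_of (gT : finGroupType) (x y : gT) : x * x = 1 -> y * y = 1 ->
  x * y = y * x -> (x * y) ^+ 2 = 1.
Proof.
move=> hx hy h; rewrite exp2g {2}h.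
by rewrite !mulgA -(mulgA _ y y) hy mulg1 hx.
Qed.

Definition rA (gT : finGroupType) (g : nat -> gT) i := g (if i == 1%N then 0%N else i).
Definition conv (x : nat) := if x == 0%N then 1%N else x.
Definition tO (k : nat) : seq nat := 0%N :: iota 2 k.-2.
Definition ks (f : seq (nat * nat)) : seq nat := flatten (map (fun p => nseq p.2 p.1) f).
Definition VD (f : seq (nat * nat)) : seq nat := flatten (map tO (ks f)).


Lemma Dn_A (n : nat) (gT : finGroupType) (g : nat -> gT) : Dn_rels n g -> ArelR g 1 n.-1.
Proof.
move=> [R0 R1 R2 R3 [R4 R5]].
have I : forall i, 1 <= i <= n.-1 -> g i * g i = 1 by move=> i hi; rewrite -exp2g R1.
split => //.
- move=> i h1 h2; apply: braid_of; try apply: I; try lia. apply: R2; lia.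
- move=> i j h1 h2 h3; apply: comm_of; try apply: I; try lia. apply: R3; lia.
Qed.

Lemma Dn_rA (n : nat) (gT : finGroupType) (g : nat -> gT) : 2 <= n -> Dn_rels n g ->
  ArelR (rA g) 1 n.-1.
Proof.
move=> hn [R0 R1 R2 R3 [R4 R5]].
have I : forall i, 1 <= i <= n.-1 -> g i * g i = 1 by move=> i hi; rewrite -exp2g R1.
have I0 : g 0%N * g 0%N = 1 by rewrite -exp2g R0.
rewrite /rA; split.
- move=> i hi; case: eqP => _ //; apply: I; lia.
- move=> i h1 h2; case: (eqVneq i 1%N) => [->|hi] /=.
  + apply: braid_of => //; first (apply: I; lia). apply: R4; lia.
  + have -> : (i.+1 == 1%N) = false by apply/eqP; lia.
    apply: braid_of; try apply: I; try lia. apply: R2; lia.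
- move=> i j h1 h2 h3.
  have -> : (j == 1%N) = false by apply/eqP; lia.
  case: (eqVneq i 1%N) => [ei|hi] /=.
  + subst i; apply: comm_of => //; first (apply: I; lia). apply: R5; lia.
  + apply: comm_of; try apply: I; try lia. apply: R3; lia.
Qed.

Lemma sgen_Dn (n : nat) : Dn_rels n (fun x => sgen n (conv x)).
Proof.
have [S1 S2 S3] := sgen_rel n.
rewrite /conv; split => /=.
- by rewrite exp2g sgen_inv.
- by move=> i _; rewrite exp2g sgen_inv.
- move=> i h1 h2; have -> : (i == 0%N) = false by apply/eqP; lia.
  apply: cube_of; rewrite ?sgen_inv //. apply: S2; lia.
- move=> i j h1 h2 h3; have -> : (i == 0%N) = false by apply/eqP; lia.
  have -> : (j == 0%N) = false by apply/eqP; lia.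
  apply: sq_of; rewrite ?sgen_inv //. apply: S3; lia.
- split.
  + move=> h; apply: cube_of; rewrite ?sgen_inv //. apply: S2; lia.
  + move=> i h1 h2; have -> : (i == 0%N) = false by apply/eqP; lia.
    apply: sq_of; rewrite ?sgen_inv //.
    case: (eqVneq i 1%N) => [->//|hi1]. apply: S3; lia.
Qed.

Lemma canc (gT : finGroupType) (x : gT) : x * x = 1 -> forall w, x * (x * w) = w.
Proof. by move=> h w; rewrite mulgA h mul1g. Qed.
Lemma commR (gT : finGroupType) (x y : gT) : x * y = y * x -> forall w, x * (y * w) = y * (x * w).
Proof. by move=> h w; rewrite !mulgA h. Qed.
Lemma braidR (gT : finGroupType) (x y : gT) : x * y * x = y * x * y ->
  forall w, x * (y * (x * w)) = y * (x * (y * w)).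
Proof. by move=> h w; rewrite !mulgA h. Qed.

Lemma iota_rcons m k : iota m k.+1 = rcons (iota m k) (m + k).
Proof. by rewrite -addn1 iotaD cats1. Qed.

Lemma asc_slide (gT : finGroupType) (r : nat -> gT) lo hi : ArelR r lo hi ->
  forall l a p, lo <= a -> a + l <= hi.+1 -> a < p -> p < a + l ->
  r p * evalW r (iota a l) = evalW r (iota a l) * r p.-1.
Proof.
move=> [H1 H2 H3]; elim=> [|l IH] a p h1 h2 h3 h4; first by lia.
rewrite /= evalW_cons.
case: (eqVneq p a.+1) => [ep|hp].
- subst p; case: l IH h2 h4 => [|l] IH h2 h4; first by lia.
  rewrite /= evalW_cons -!mulgA braidR; last by apply/esym/H2; lia.
  congr (_ * (_ * _)).
  apply/esym; apply: evalW_comm => x; rewrite mem_iota => hx; apply/esym/H3; lia.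
- move/eqP: hp => hp. rewrite mulgA -H3; try lia. rewrite -mulgA (IH a.+1 p); try lia. by rewrite mulgA.
Qed.

Definition Wv (gT : finGroupType) (g : nat -> gT) p := if p == 0%N then 1 else evalW g (wD p).
Definition xk (gT : finGroupType) (g : nat -> gT) k := evalW g (iota 2 k.-2).

Lemma Wv1 (gT : finGroupType) (g : nat -> gT) : Wv g 1%N = g 1%N * g 0%N.
Proof. by rewrite /Wv /wD /= !evalW_cons evalW_nil mulg1. Qed.

Lemma wDS p : wD p.+2 = p.+2 :: rcons (wD p.+1) p.+2.
Proof.
rewrite /wD [iota 1 p.+2]iota_rcons rev_rcons [iota 2 p.+1]iota_rcons.
by rewrite -rcons_cons rcons_cat add1n add2n.
Qed.

Lemma WvS (gT : finGroupType) (g : nat -> gT) p : 0 < p ->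
  Wv g p.+1 = g p.+1 * Wv g p * g p.+1.
Proof.
case: p => [//|p] _.
by rewrite /Wv /= wDS evalW_cons evalW_rcons !mulgA.
Qed.

Lemma tD_eval (gT : finGroupType) (g : nat -> gT) k : 1 < k ->
  evalW g (tD k) = g 1%N * xk g k.
Proof. by case: k => [|[|k]] // _; rewrite /tD /= evalW_cons. Qed.

Lemma tO_eval (gT : finGroupType) (g : nat -> gT) k : evalW g (tO k) = g 0%N * xk g k.
Proof. by rewrite /tO evalW_cons. Qed.


Lemma I1 (n : nat) (gT : finGroupType) (g : nat -> gT) : 1 < n -> Dn_rels n g ->
  forall k, 1 < k <= n -> evalW g (tD k) = evalW g (tO k) * Wv g k.-1.
Proof.
move=> hn R; have [A1 A2 A3] := Dn_A R; have [R0 _ _ _ [_ R5]] := R.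
have I0 : g 0%N * g 0%N = 1 by rewrite -exp2g R0.
have c01 : g 0%N * g 1%N = g 1%N * g 0%N.
  apply: comm_of => //; first (apply: A1; lia). apply: R5; lia.
move=> [|[|k]] // hk.
rewrite tD_eval // tO_eval /Wv /= /wD evalW_cat evalW_cons evalW_rev; last first.
  move=> x; rewrite mem_iota => hx; apply: A1; lia.
have -> : evalW g (iota 1 k.+1) = g 1%N * xk g k.+2 by rewrite /= evalW_cons.
rewrite invMg (inv_of (A1 1%N _)); last by lia.
rewrite /xk /= !mulgA mulgK c01 -(mulgA (g 1%N)) I0 mulg1 //.
Qed.

Lemma I2 (n : nat) (gT : finGroupType) (g : nat -> gT) : 1 < n -> Dn_rels n g ->
  forall k, 1 < k <= n -> forall p, 0 < p -> p < k -> forall w,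
  Wv g p * (g 1%N * (xk g k * w)) = g 0%N * (xk g k * (Wv g p.-1 * w)).
Proof.
move=> hn R; have [A1 A2 A3] := Dn_A R; have [R0 _ _ _ [R4 R5]] := R.
have I0 : g 0%N * g 0%N = 1 by rewrite -exp2g R0.
have I1' : g 1%N * g 1%N = 1 by apply: A1; lia.
have c0 : forall i, 1 <= i <= n.-1 -> i != 2 -> g 0%N * g i = g i * g 0%N.
  move=> i hi hi2; apply: comm_of => //; first (apply: A1; lia). by apply: R5.
have c01 := c0 1%N (ltac:(lia)) isT.
move=> k hk; elim/ltn_ind => p IH hp hpk w.
case: p IH hp hpk => [//|[|[|p]]] IH _ hpk.
-
  by rewrite Wv1 /Wv /= mul1g -mulgA (commR c01) (canc I1').
-
  have hn3 : 2 < n by lia.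
  have I2' : g 2%N * g 2%N = 1 by apply: A1; lia.
  rewrite (WvS g (isT : 0 < 1)) Wv1.
  have ex : forall k', 2 < k' -> evalW g (iota 2 k'.-2) = g 2%N * evalW g (iota 3 (k' - 3)).
    case=> [|[|[|k']]] // _. by rewrite !subSS subn0 /= evalW_cons.
  rewrite /xk ex //.
  set z := evalW g (iota 3 (k - 3)).
  have hz0 : forall w, g 0%N * (z * w) = z * (g 0%N * w).
    move=> w'; rewrite !mulgA; congr (_ * _); apply/esym; apply: evalW_comm.
    move=> x; rewrite mem_iota => hx; apply/esym/c0; lia.
  have hz1 : forall w, g 1%N * (z * w) = z * (g 1%N * w).
    move=> w'; rewrite !mulgA; congr (_ * _); apply/esym; apply: evalW_comm.
    move=> x; rewrite mem_iota => hx; apply/esym/A3; lia.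
  have b12 : g 1%N * g 2%N * g 1%N = g 2%N * g 1%N * g 2%N by apply: A2; lia.
  have b02 : g 0%N * g 2%N * g 0%N = g 2%N * g 0%N * g 2%N.
    apply: braid_of => //. apply: R4; lia.
  rewrite -!mulgA (braidR (esym b12)) (commR c01) (canc I1') (braidR (esym b02)).
  congr (_ * (_ * _)).
  by rewrite hz1 hz0 (commR c01).
-
  set q := p.+3.
  have hq : q < k := hpk.
  rewrite (WvS g (isT : 0 < p.+2)) (WvS g (isT : 0 < p.+1)).
  have cq1 : forall w, g q * (g 1%N * w) = g 1%N * (g q * w).
    apply: commR; apply/esym/A3; lia.
  have cq0 : forall w, g q * (g 0%N * w) = g 0%N * (g q * w).
    apply: commR; apply/esym/c0; lia.
  have sl : forall w, g q * (xk g k * w) = xk g k * (g p.+2 * w).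
    move=> w'; rewrite mulgA (asc_slide (Dn_A R) (l := k.-2) (a := 2) (p := q)); try lia.
    by rewrite -mulgA.
  have IH' := IH p.+2 (ltac:(lia)) isT (ltac:(lia)).
  rewrite (WvS g (isT : 0 < p.+1)) in IH'.
  rewrite -!mulgA cq1 sl. have IH2 := IH' (g p.+2 * w). rewrite -!mulgA /= in IH2. by rewrite IH2 cq0 sl.
Qed.

Lemma Lchain (n : nat) (gT : finGroupType) (g : nat -> gT) : 1 < n -> Dn_rels n g ->
  forall ks p, size ks = p -> all (fun k => p < k <= n) ks ->
  Wv g p * evalW g (flatten (map tD ks)) = evalW g (flatten (map tO ks)).
Proof.
move=> hn R; elim=> [|k ks IH] p hs ha.
  by subst p; rewrite /Wv /= evalW_nil mulg1.
subst p; move: ha => /= /andP [hk ha].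
rewrite !evalW_cat tD_eval; last by lia.
rewrite evalW_cons evalW_cat -/(xk g k) -!mulgA (I2 hn R (k := k)) //; try lia.
rewrite /= (IH (size ks)) //.
apply/allP => x hx; move/allP: ha => /(_ x hx); lia.
Qed.

Lemma tauD_ks f : tauD f = flatten (map tD (ks f)).
Proof.
elim: f => [//|[h i] f IH]; rewrite /tauD /ks /= -/(tauD f) -/(ks f) IH.
by rewrite map_cat flatten_cat map_nseq.
Qed.

Lemma size_ks f : size (ks f) = majf f.
Proof.
elim: f => [|[h i] f IH]; first by rewrite /majf big_nil.
by rewrite /ks /= size_cat size_nseq -/(ks f) IH /majf big_cons.
Qed.

Lemma mem_ks f k : k \in ks f -> exists2 p, p \in f & k = p.1.
Proof.
elim: f => [//|[h i] f IH]; rewrite /ks /= mem_cat -/(ks f) => /orP [].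
  rewrite mem_nseq => /andP [_ /eqP ->]. by exists (h, i); rewrite ?inE ?eqxx.
move=> /IH [p pf ->]; exists p => //; by rewrite inE pf orbT.
Qed.

Lemma factor_eq (n : nat) (gT : finGroupType) (g : nat -> gT) : 1 < n -> Dn_rels n g ->
  forall f, canon_pos n f -> majf f <= firstH f -> evalW g (piD f) = evalW g (VD f).
Proof.
move=> hn R f /and3P [fn0 fs fa] hm.
case: f fn0 fs fa hm => [//|[h i] f'] _ fs fa hm.
have ltf : forall p, p \in f' -> h < p.1.
  move: fs => /= /(order_path_min ltn_trans) /allP H p pf; apply: H.
  by apply: map_f.
move: (fa) => /= /andP [/andP [/andP [h2 hn'] /andP [i0 ih]] fa'].
have bnd : forall p, p \in (h, i) :: f' -> p.1 <= n.
  move=> p; rewrite inE => /orP [/eqP -> //|pf].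
  by move/allP: fa' => /(_ p pf) /andP [/andP [_ ->] _].
have kbnd : forall k, k \in ks ((h, i) :: f') -> h <= k <= n.
  move=> k /mem_ks [p pf ->]; rewrite bnd // andbT.
  move: pf; rewrite inE => /orP [/eqP -> //|pf]. by have := ltf p pf; lia.
rewrite /firstH /= in hm.
have hM : majf ((h, i) :: f') = size (ks ((h, i) :: f')) by rewrite size_ks.
rewrite /piD /firstH /= tauD_ks /VD.
case: eqP => hmh.
-
  have eks : ks ((h, i) :: f') = h :: (nseq i.-1 h ++ ks f').
    have ei : i = i.-1.+1 by lia. by rewrite /ks /= {1}ei.
  rewrite eks /= !evalW_cat (I1 hn R (k := h)); last by lia.
  rewrite -mulgA (Lchain hn R (p := h.-1)).
  + by rewrite tO_eval evalW_cons evalW_cat mulgA.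
  + move: hM; rewrite hmh eks /=; lia.
  + apply/allP => k hk; have := kbnd k; rewrite eks inE hk orbT => /(_ isT); lia.
-
  have hm1 : 0 < majf ((h, i) :: f') by rewrite /majf big_cons /=; lia.
  rewrite evalW_cat.
  have -> : evalW g (wD (majf ((h, i) :: f'))) = Wv g (majf ((h, i) :: f')).
    by rewrite /Wv; case: eqP => //; lia.
  rewrite (Lchain hn R (p := majf ((h, i) :: f'))) //.
  apply/allP => k hk; have := kbnd k hk; lia.
Qed.

Lemma evalW_flatten_map (gT : finGroupType) (g : nat -> gT) (T : Type) (F : T -> seq nat) s :
  evalW g (flatten (map F s)) = \prod_(x <- s) evalW g (F x).
Proof.
elim: s => [|x s IH]; first by rewrite big_nil evalW_nil.
by rewrite /= evalW_cat IH big_cons.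
Qed.

Lemma PhiW_eval n w : PhiW n w = evalW (fun x => sgen n (conv x)) w.
Proof. by []. Qed.

Lemma PhiW_map n w : PhiW n w = evalW (sgen n) (map conv w).
Proof. by rewrite /PhiW /evalW big_map. Qed.

Definition good n x := (x == 0%N) || (2 <= x <= n.-1).

Lemma evalW_conv (n : nat) (gT : finGroupType) (g : nat -> gT) w :
  all (good n) w -> evalW g w = evalW (rA g) (map conv w).
Proof.
move=> hw; rewrite /evalW big_map; apply: eq_big_seq => x hx.
move/allP: hw => /(_ x hx); rewrite /good /rA /conv.
by case: eqP => [->|hx0] //= h; case: eqP => // e; move: h; rewrite e.
Qed.

Lemma conv_range n w : 1 < n -> all (good n) w -> all (fun x => 0 < x <= n.-1) (map conv w).
Proof.
move=> hn /allP hw; apply/allP => y /mapP [x hx ->].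
move: (hw x hx); rewrite /good /conv; case: eqP => [_|_] /= h; lia.
Qed.

Lemma good_tO n ks : all (fun k => k <= n) ks -> all (good n) (flatten (map tO ks)).
Proof.
elim: ks => [//|k ks IH] /= /andP [hk hks]; rewrite all_cat IH // andbT /tO /=.
apply/allP => x; rewrite mem_iota /good => hx; apply/orP; right; lia.
Qed.

Lemma sgen_involutive n x : sgen n (conv x) * sgen n (conv x) = 1.
Proof. exact: sgen_inv. Qed.

Lemma PhiW_wD n M : PhiW n (wD M.+1) = 1.
Proof.
rewrite PhiW_eval /wD evalW_cat evalW_rev; last by move=> x _; apply: sgen_inv.
have -> : evalW (fun x => sgen n (conv x)) (0%N :: iota 2 M.+1.-1) =
          evalW (fun x => sgen n (conv x)) (iota 1 M.+1) by rewrite /= !evalW_cons.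
by rewrite mulVg.
Qed.

Lemma PhiW_tD n k : PhiW n (tD k) = tS n k.
Proof.
rewrite /PhiW /tS /tD; apply: eq_big_seq => x; rewrite mem_iota => hx.
by rewrite /conv; case: eqP => //; lia.
Qed.

Lemma prod_nseq n i h : \prod_(k <- nseq i h) tS n k = tS n h ^+ i.
Proof.
elim: i => [|i IH]; first by rewrite big_nil expg0.
by rewrite /= big_cons IH expgS.
Qed.

Lemma PhiW_tauD n f : PhiW n (tauD f) = factor_val n f.
Proof.
rewrite tauD_ks PhiW_eval evalW_flatten_map.
under eq_bigr => k _ do rewrite -PhiW_eval PhiW_tD.
elim: f => [|[h i] f IH]; first by rewrite /ks /factor_val !big_nil.
by rewrite /ks /= big_cat /= prod_nseq -/(ks f) IH /factor_val big_cons.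
Qed.

Lemma PhiW_piD n f : canon_pos n f -> PhiW n (piD f) = factor_val n f.
Proof.
move=> /and3P [fn0 _ fa]; rewrite /piD; case: eqP => _; first exact: PhiW_tauD.
case: f fn0 fa => [//|[h i] f] _ /= /andP [/andP [_ /andP [i0 _]] _].
have -> : majf ((h, i) :: f) = (majf ((h, i) :: f)).-1.+1.
  by rewrite prednK // /majf big_cons /=; lia.
rewrite PhiW_eval evalW_cat -!PhiW_eval PhiW_wD mul1g; exact: PhiW_tauD.
Qed.

Close Scope group_scope.

Theorem mainTheorem10 (n : nat) (gT : finGroupType) (g : nat -> gT)
    (u : seq nat) (fs : seq (seq (nat * nat))) :
  2 <= n ->
  Dn_rels n g ->
  all (fun x => (x == 0) || (2 <= x <= n.-1)) u ->
  is_std_elem_fact (PhiW n u) fs ->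
  evalW g u = evalW g (flatten (map piD fs)).
Proof.
move=> hn R hu [[hall1 hall2 _ hprod] _].
set W := flatten (map VD fs).
have e1 : evalW g (flatten (map piD fs)) = evalW g W.
  rewrite /W !evalW_flatten_map; apply: eq_big_seq => f hf.
  apply: (factor_eq hn R); [exact: (allP hall1) | exact: (allP hall2 f hf)].
have e2 : PhiW n W = PhiW n u.
  rewrite hprod PhiW_eval /W evalW_flatten_map; apply: eq_big_seq => f hf.
  rewrite -(factor_eq hn (sgen_Dn n)); [ | exact: (allP hall1) | exact: (allP hall2 f hf)].
  rewrite -PhiW_eval PhiW_piD //; exact: (allP hall1).
have hW : all (good n) W.
  rewrite /W; elim: fs hall1 {hall2 hprod e1 e2 W} => [//|f fs IH] /= /andP [hf hfs].
  rewrite all_cat IH // andbT /VD; apply: good_tO.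
  apply/allP => k /mem_ks [p pf ->].
  move: hf => /and3P [_ _ /allP /(_ p pf) /andP [/andP [_ ->] _]] //.
have hu' : all (good n) u by [].
rewrite e1 (@evalW_conv n _ g u hu') (@evalW_conv n _ g W hW).
apply: (presentation (n := n)) => //; first by lia.
- exact: Dn_rA.
- exact: conv_range.
- exact: conv_range.
- by rewrite -!PhiW_map e2.
Qed.
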